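(* Let $r:V\times V\to\{0,1\}$. If an undirected edge set (multigraph) $H$ on $V$ covers $f_r$, i.e., $d_H(X)\ge f_r(X)$ for all $X\subseteq V$, then $H$ has an orientation $D$ such that $D$ contains a directed $uv$-path for every $(u,v)$ with $r(u,v)=1$.
   Context: For $X\subseteq V$ let $\bar X=V\setminus X$, and $d_H(X)$ the number of edges of $H$ with one endpoint in $X$ and the other in $\bar X$. The set function $f_r$ is defined by $f_r(\emptyset)=f_r(V)=0$ and, for $\emptyset\ne X\subsetneq V$, $f_r(X)=\max\{r(u,v):u\in X,v\in\bar X\}+\max\{r(v,u):u\in X,v\in\bar X\}$. *)

(* Defs.v *)
From mathcomp Require Import all_boot.
Set Implicit Arguments. Unset Strict Implicit. Unset Printing Implicit Defensive.

(* A multigraph H on V is a sequence of (unordered) edges, each stored as a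
   pair of endpoints; multiplicities are allowed. *)

Definition dcut (V : finType) (H : seq (V * V)) (X : {set V}) : nat :=
  count (fun e => (e.1 \in X) != (e.2 \in X)) H.

Definition f_r (V : finType) (r : V -> V -> bool) (X : {set V}) : nat :=
  if (X == set0) || (X == setT) then 0
  else (\max_(u in X) \max_(v in ~: X) nat_of_bool (r u v))
     + (\max_(u in X) \max_(v in ~: X) nat_of_bool (r v u)).

Definition is_orientation (V : finType) (H D : seq (V * V)) : bool :=
  all2 (fun e d => (d == e) || (d == (e.2, e.1))) H D.

Definition dipath (V : finType) (D : seq (V * V)) (u v : V) : bool :=
  connect (fun x y => (x, y) \in D) u v.

(* Main.v *)
Require Import Defs.
From mathcomp Require Import all_boot.
Set Implicit Arguments. Unset Strict Implicit. Unset Printing Implicit Defensive.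


Section Aux.
Variable V : finType.
Implicit Types (H D : seq (V * V)) (X Y : {set V}) (r : V -> V -> bool).

Definition outd r X : bool := [exists u, exists v, [&& u \in X, v \notin X & r u v]].

Lemma bigmaxE r X :
  \max_(u in X) \max_(v in ~: X) nat_of_bool (r u v) = outd r X.
Proof.
case: (boolP (outd r X)) => Ho.
- case/existsP: Ho => u /existsP [v /and3P [hu hv huv]].
  apply/eqP; rewrite eqn_leq; apply/andP; split.
  + apply/bigmax_leqP => u' _; apply/bigmax_leqP => v' _; by case: (r u' v').
  + apply: leq_trans (leq_bigmax_cond _ hu).
    have hv' : v \in ~: X by rewrite in_setC.
    by apply: leq_trans (leq_bigmax_cond _ hv'); rewrite huv.
- apply/eqP; rewrite -leqn0.
  apply/bigmax_leqP => u' hu; apply/bigmax_leqP => v' hv.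
  case E: (r u' v') => //; exfalso; move/negP: Ho; apply.
  apply/existsP; exists u'; apply/existsP; exists v'.
  by rewrite hu E andbT -in_setC.
Qed.

Lemma f_rE r X : f_r r X = outd r X + outd (fun u v => r v u) X.
Proof.
rewrite /f_r; case: ifP => [/orP [/eqP-> | /eqP->] | _].
- have h : forall r', outd r' set0 = false.
    move=> r'; apply: negbTE; apply/existsP => -[u /existsP [v]]; by rewrite inE.
  by rewrite !h.
- have h : forall r', outd r' setT = false.
    move=> r'; apply: negbTE; apply/existsP => -[u /existsP [v]]; by rewrite !in_setT /= ?andbF.
  by rewrite !h.
- by rewrite bigmaxE (bigmaxE (fun u v => r v u)).
Qed.

Definition darc D : rel V := fun x y => (x, y) \in D.

Lemma connect_subD D1 D2 : {subset D1 <= D2} ->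
  forall u v, connect (darc D1) u v -> connect (darc D2) u v.
Proof.
move=> sub; apply: connect_sub => x y h; apply: connect1; exact: sub.
Qed.

Lemma dcut_cons e H X : dcut (e :: H) X = ((e.1 \in X) != (e.2 \in X)) + dcut H X.
Proof. by []. Qed.

Lemma dcut_cat H1 H2 X : dcut (H1 ++ H2) X = dcut H1 X + dcut H2 X.
Proof. by rewrite /dcut count_cat. Qed.

Lemma dcut_perm H1 H2 X : perm_eq H1 H2 -> dcut H1 X = dcut H2 X.
Proof. by move/permP => h; rewrite /dcut h. Qed.

Lemma perm_zip (Z : seq ((V * V) * (V * V))) (H1 : seq (V * V)) :
  perm_eq H1 (unzip1 Z) ->
  exists D1, size D1 = size H1 /\ perm_eq (zip H1 D1) Z.
Proof.
elim: H1 Z => [|x H1 IH] Z hp.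
  exists [::]; split => //=.
  by case: Z hp => // z Z; rewrite perm_sym => /perm_nilP.
have : x \in unzip1 Z by rewrite -(perm_mem hp) mem_head.
case/mapP => [[x' d] hz /= ?]; subst x'.
have hZ := perm_to_rem hz.
have hp' : perm_eq H1 (unzip1 (rem (x, d) Z)).
  rewrite -(perm_cons x); apply: perm_trans hp _.
  by have := perm_map (@fst _ _) hZ.
case: (IH _ hp') => D1 [hs hp1].
exists (d :: D1); split; first by rewrite /= hs.
rewrite -(perm_cons (x, d)) in hp1; rewrite /= (permPl hp1) perm_sym; exact: hZ.
Qed.

Lemma orient_perm H1 H2 D2 : perm_eq H1 H2 -> is_orientation H2 D2 ->
  exists D1, is_orientation H1 D1 /\ D1 =i D2.
Proof.
move=> hp; rewrite /is_orientation all2E => /andP [/eqP hs hall].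
have hz : perm_eq H1 (unzip1 (zip H2 D2)) by rewrite unzip1_zip ?hs.
case: (perm_zip hz) => D1 [hs1 hp1].
exists D1; split.
- rewrite all2E hs1 eqxx /=.
  by rewrite (perm_all _ hp1).
- have := perm_map (@snd _ _) hp1; rewrite -!/(unzip2 _) !unzip2_zip ?hs1 ?hs //.
  exact: perm_mem.
Qed.

End Aux.


Section Contr.
Variable V : finType.
Implicit Types (g : V -> V) (H D Dg DR R Cs : seq (V * V)) (X Y : {set V}) (r : V -> V -> bool).

Definition gmap (g : V -> V) (f : V * V) := (g f.1, g f.2).
Definition rmap (g : V -> V) r : V -> V -> bool :=
  fun x y => [exists u, exists v, [&& g u == x, g v == y & r u v]].

Lemma contr_cover g r Cs R :
  (forall X, f_r r X <= dcut (Cs ++ R) X) ->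
  (forall f, f \in Cs -> g f.1 = g f.2) ->
  forall Y, f_r (rmap g r) Y <= dcut (map (gmap g) R) Y.
Proof.
move=> hcov hC Y.
pose X := [set z | g z \in Y].
have e1 : dcut (map (gmap g) R) Y = dcut R X.
  by rewrite /dcut count_map; apply: eq_count => f; rewrite /= !inE.
have e2 : dcut Cs X = 0.
  apply/eqP; rewrite -leqn0 leqNgt -has_count; apply/hasPn => f hf /=.
  by rewrite !inE (hC f hf) eqxx.
rewrite e1; have := hcov X; rewrite dcut_cat e2 add0n; apply: leq_trans.
rewrite !f_rE; apply: leq_add.
- case: (boolP (outd _ _)) => // /existsP [x /existsP [y /and3P [hx hy]]].
  case/existsP => u /existsP [v /and3P [/eqP hu /eqP hv huv]].
  rewrite lt0b; apply/existsP; exists u; apply/existsP; exists v.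
  by rewrite !inE hu hv hx hy huv.
- case: (boolP (outd _ _)) => // /existsP [x /existsP [y /and3P [hx hy]]].
  case/existsP => u /existsP [v /and3P [/eqP hu /eqP hv huv]].
  rewrite lt0b; apply/existsP; exists v; apply/existsP; exists u.
  by rewrite !inE hu hv hx hy huv.
Qed.

Definition liftarc (g : V -> V) (f d : V * V) :=
  if d == gmap g f then f else (f.2, f.1).

Lemma lift_exists g R Dg : is_orientation (map (gmap g) R) Dg ->
  exists DR, is_orientation R DR /\
    forall p q, (p, q) \in Dg -> exists x y, [/\ (x, y) \in DR, g x = p & g y = q].
Proof.
elim: R Dg => [|f R IH] [|d Dg] //=.
- move=> _; exists [::]; split => // p q; by rewrite in_nil.
- case/andP => hd ho; case: (IH _ ho) => DR [hR hl].
  exists (liftarc g f d :: DR); split.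
  + rewrite /= hR andbT /liftarc; case: ifP => _; first by rewrite eqxx.
    by rewrite eqxx orbT.
  + move=> p q; rewrite in_cons => /orP [/eqP hpq | /hl [x [y [h1 h2 h3]]]].
    * rewrite /liftarc; case: ifP => hd'.
      - exists f.1, f.2; rewrite mem_head; split => //.
        + by move: hd'; rewrite -hpq => /eqP [].
        + by move: hd'; rewrite -hpq => /eqP [].
      - move: hd; rewrite hd' /= -hpq /gmap => /eqP [-> ->].
        by exists f.2, f.1; rewrite mem_head.
    * by exists x, y; rewrite in_cons h1 orbT.
Qed.

Lemma path_lift g D Dg DR :
  (forall x y, g x = g y -> connect (darc D) x y) ->
  {subset DR <= D} ->
  (forall p q, (p, q) \in Dg -> exists x y, [/\ (x, y) \in DR, g x = p & g y = q]) ->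
  forall s p, path (darc Dg) p s -> forall x y, g x = p -> g y = last p s ->
  connect (darc D) x y.
Proof.
move=> hg hsub hl; elim => [|p1 s IH] p /=.
- by move=> _ x y hx hy; apply: hg; rewrite hx hy.
- case/andP => /hl [x1 [y1 [h1 h2 h3]]] hp x y hx hy.
  apply: (connect_trans (hg x x1 _)); first by rewrite hx h2.
  apply: connect_trans (connect1 (hsub _ h1)) _.
  exact: IH hp y1 y h3 hy.
Qed.

Lemma sat_lift g r D Dg DR :
  (forall x y, g x = g y -> connect (darc D) x y) ->
  {subset DR <= D} ->
  (forall p q, (p, q) \in Dg -> exists x y, [/\ (x, y) \in DR, g x = p & g y = q]) ->
  (forall u v, rmap g r u v -> connect (darc Dg) u v) ->
  forall u v, r u v -> connect (darc D) u v.
Proof.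
move=> hg hsub hl hsat u v huv.
have : rmap g r (g u) (g v).
  by apply/existsP; exists u; apply/existsP; exists v; rewrite !eqxx huv.
case/hsat/connectP => s hp hlast.
exact: (path_lift hg hsub hl hp).
Qed.

End Contr.


Section Bridge.
Variable V : finType.
Implicit Types (H D : seq (V * V)) (X Y Z : {set V}) (r : V -> V -> bool).

Definition rb r (s t : V) X : V -> V -> bool := fun u v =>
  [|| r u v && ((u \in X) == (v \in X)),
      [&& u \notin X, v == s & [exists w, (w \in X) && r u w]] |
      [&& u == t, v \in X & [exists w, (w \notin X) && r w v]]].

Lemma count_split (T : eqType) (a b c : pred T) (s : seq T) :
  (forall x, x \in s -> a x = b x + c x :> nat) -> count a s = count b s + count c s.
Proof.
elim: s => //= x s IH h.
rewrite IH; last by move=> y hy; apply: h; rewrite in_cons hy orbT.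
rewrite h ?mem_head //; rewrite !addnA; congr (_ + _).
by rewrite -!addnA (addnC (c x)).
Qed.

Lemma bridge_cover r s t X H' :
  s \notin X -> t \in X ->
  (forall f, f \in H' -> (f.1 \in X) = (f.2 \in X)) ->
  (forall Z, f_r r Z <= dcut ((s, t) :: H') Z) ->
  forall Y, f_r (rb r s t X) Y <= dcut H' Y.
Proof.
move=> hs ht hX hcov Y.
pose Z1 := (Y :&: X) :|: [set z | (t \in Y) && (z \notin X)].
pose Z2 := (Y :\: X) :|: [set z | (s \in Y) && (z \in X)].
have eA : dcut H' Y = dcut ((s, t) :: H') Z1 + dcut ((s, t) :: H') Z2.
  rewrite !dcut_cons /=.
  have -> : (s \in Z1) = (t \in Z1).
    by rewrite /Z1; case htY: (t \in Y); rewrite !inE (negbTE hs) ht ?htY ?andbF ?andbT ?orbF.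
  have -> : (s \in Z2) = (t \in Z2).
    by rewrite /Z2; case hsY: (s \in Y); rewrite !inE (negbTE hs) ht ?hsY ?andbF ?andbT ?orbF.
  rewrite !eqxx /= !add0n /dcut; apply: count_split => f hf.
  move: (hX f hf); case: f hf => x y hf /= hxy.
  rewrite /Z1 /Z2; case htY: (t \in Y); case hsY: (s \in Y); rewrite !inE -hxy;
  by case: (x \in X); case: (x \in Y); case: (y \in Y); case: (t \in Y); case: (s \in Y).
rewrite eA; apply: leq_trans (leq_add (hcov Z1) (hcov Z2)).
rewrite !f_rE.
set o := outd _ Y; set i := outd (fun u v => rb r s t X v u) Y.
set o1 := outd r Z1; set i1 := outd _ Z1; set o2 := outd r Z2; set i2 := outd _ Z2.
have ho : o -> o1 || o2.
  case/existsP => u /existsP [v /and3P [hu hv]].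
  case/or3P => [/andP [huv /eqP hsame] | /and3P [hux /eqP hvs /existsP [w /andP [hw huw]]]
               | /and3P [/eqP hut hvx /existsP [w /andP [hw hwv]]]].
  - case hux: (u \in X).
    + apply/orP; left; apply/existsP; exists u; apply/existsP; exists v.
      by rewrite !inE hu hux -hsame hux (negbTE hv) huv /= ?andbF ?andbT ?orbF ?orbT.
    + apply/orP; right; apply/existsP; exists u; apply/existsP; exists v.
      by rewrite !inE hu hux -hsame hux (negbTE hv) huv /= ?andbF ?andbT ?orbF ?orbT.
  - subst v; apply/orP; right; apply/existsP; exists u; apply/existsP; exists w.
    by rewrite !inE hu (negbTE hux) (negbTE hv) hw huw /= ?andbF ?andbT ?orbF ?orbT.
  - subst u; apply/orP; left; apply/existsP; exists w; apply/existsP; exists v.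
    by rewrite !inE hu hvx (negbTE hv) (negbTE hw) hwv /= ?andbF ?andbT ?orbF ?orbT.
have hi : i -> i1 || i2.
  case/existsP => u /existsP [v /and3P [hu hv]].
  case/or3P => [/andP [hvu /eqP hsame] | /and3P [hvx /eqP hus /existsP [w /andP [hw hvw]]]
               | /and3P [/eqP hvt hux /existsP [w /andP [hw hwu]]]].
  - case hvx: (v \in X).
    + apply/orP; left; apply/existsP; exists u; apply/existsP; exists v.
      by rewrite !inE hu -hsame hvx (negbTE hv) hvu /= ?andbF ?andbT ?orbF ?orbT.
    + apply/orP; right; apply/existsP; exists u; apply/existsP; exists v.
      by rewrite !inE hu -hsame hvx (negbTE hv) hvu /= ?andbF ?andbT ?orbF ?orbT.
  - subst u; apply/orP; right; apply/existsP; exists w; apply/existsP; exists v.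
    by rewrite !inE hu (negbTE hvx) (negbTE hv) hw hvw /= ?andbF ?andbT ?orbF ?orbT.
  - subst v; apply/orP; left; apply/existsP; exists u; apply/existsP; exists w.
    by rewrite !inE hu hux (negbTE hv) (negbTE hw) hwu /= ?andbF ?andbT ?orbF ?orbT.
clearbody o i o1 i1 o2 i2.
have A : (o:nat) <= o1 + o2 by case: o ho => // /(_ isT); case: o1; case: o2.
have B : (i:nat) <= i1 + i2 by case: i hi => // /(_ isT); case: i1; case: i2.
by apply: leq_trans (leq_add A B) _; rewrite addnACA.
Qed.

Lemma bridge_sat r s t X D' :
  (forall u v, r u v -> u \in X -> v \in X) ->
  (forall u v, rb r s t X u v -> connect (darc D') u v) ->
  forall u v, r u v -> connect (darc ((s, t) :: D')) u v.
Proof.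
move=> hno hsat u v huv.
have sub : {subset D' <= (s, t) :: D'} by move=> z hz; rewrite in_cons hz orbT.
case hs: ((u \in X) == (v \in X)).
  by apply: (connect_subD sub); apply: hsat; rewrite /rb huv hs.
have hux : u \notin X by apply/negP => hu; move: hs; rewrite hu (hno _ _ huv hu).
have hvx : v \in X by move: hs; rewrite (negbTE hux); case: (v \in X).
apply: (connect_trans (y := s)).
  apply: (connect_subD sub); apply: hsat; apply/or3P; apply: Or32.
  by rewrite hux eqxx; apply/existsP; exists v; rewrite hvx huv.
apply: (connect_trans (y := t)); first by apply: connect1; rewrite /darc mem_head.
apply: (connect_subD sub); apply: hsat; apply/or3P; apply: Or33.
by rewrite eqxx hvx; apply/existsP; exists u; rewrite hux huv.
Qed.

End Bridge.


Section Extract.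
Variable V : finType.
Implicit Types (H D C DC R : seq (V * V)).

Definition adj H : rel V := fun x y => ((x, y) \in H) || ((y, x) \in H).

Lemma extract H (x : V) (p : seq V) :
  path (adj H) x p -> uniq (x :: p) ->
  exists C DC R, [/\ perm_eq H (C ++ R), is_orientation C DC, path (darc DC) x p &
     forall f, f \in C -> (f.1 \in x :: p) && (f.2 \in x :: p)].
Proof.
elim: p x H => [|y p IH] x H.
  move=> _ _; exists [::], [::], H; split => //.
case/andP => hxy hp /andP [hx hu].
pose f := if (x, y) \in H then (x, y) else (y, x).
have hf : f \in H by rewrite /f; case: ifP => // h; move: hxy; rewrite /adj h.
have hp' : path (adj (rem f H)) y p.
  apply: (sub_in_path (P := predC1 x)); last first.
  - exact: hp.
  - apply/allP => z hz /=; apply/negP => /eqP hzx; subst z; by rewrite hz in hx.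
  move=> u v hu' hv' /orP h; apply/orP.
  have nf : forall a b, a != x -> b != x -> (a, b) != f.
    move=> a b hax hbx; rewrite /f; case: ifP => _; apply/negP => /eqP [] //;
      move=> *; subst; by rewrite eqxx in hax hbx.
  have n1 := nf u v hu' hv'; have n2 := nf v u hv' hu'.
  case: h => h; [left | right]; apply: rem_mem => //.
case: (IH y (rem f H) hp' hu) => C [DC [R [hperm hor hpath hend]]].
exists (f :: C), ((x, y) :: DC), R; split.
- by apply: perm_trans (perm_to_rem hf) _; rewrite /= perm_cons.
- rewrite /is_orientation /=; apply/andP; split; last exact: hor.
  by rewrite /f; case: ifP => _ /=; rewrite eqxx ?orbT.
- rewrite /= /darc mem_head /=; apply: sub_path hpath => a b h.
  by rewrite /darc in_cons; apply/orP; right.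
- move=> g; rewrite in_cons => /orP [/eqP -> | hg].
  + by rewrite /f; case: ifP => _ /=; rewrite !in_cons !eqxx ?orbT.
  + move/andP: (hend g hg) => [h1 h2].
    by rewrite in_cons h1 in_cons h2 !orbT.
Qed.

End Extract.


Section Main.
Variable V : finType.
Implicit Types (H D C DC R : seq (V * V)) (r : V -> V -> bool).

Lemma orient_cat C R DC DR : is_orientation C DC -> is_orientation R DR ->
  is_orientation (C ++ R) (DC ++ DR).
Proof.
rewrite /is_orientation; elim: C DC => [|c C IH] [|d DC] //= /andP [h1 h2] h3.
by rewrite h1 IH.
Qed.

Lemma path_last_connect (e : rel V) x p z :
  path e x p -> z \in x :: p -> connect e z (last x p).
Proof.
elim: p x z => [|y p IH] x z /=.
  by move=> _; rewrite mem_seq1 => /eqP ->.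
case/andP => hxy hp; rewrite in_cons => /orP [/eqP -> | hz].
  exact: (connect_trans (y := y)) (connect1 hxy) (IH y y hp (mem_head _ _)).
exact: IH.
Qed.

Lemma empty_case r : (forall X, f_r r X <= dcut [::] X) ->
  forall u v, r u v -> connect (darc [::]) u v.
Proof.
move=> hcov u v huv.
case: (eqVneq u v) => [-> | huv']; first exact: connect0.
have := hcov [set u]; rewrite f_rE /dcut /=.
have -> : outd r [set u] = true.
  apply/existsP; exists u; apply/existsP; exists v.
  by rewrite !inE eqxx eq_sym huv' huv.
by [].
Qed.

Lemma main n : forall H r, size H <= n -> (forall X, f_r r X <= dcut H X) ->
  exists D, is_orientation H D /\ forall u v, r u v -> connect (darc D) u v.
Proof.
elim: n => [|n IHn] H r.
  rewrite leqn0 => /nilP -> hcov; exists [::]; split => //; exact: empty_case.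
case: H => [|[a b] H'] hs hcov.
  exists [::]; split => //; exact: empty_case.
have hs' : size H' <= n by [].
case: (boolP (connect (adj H') b a)) => hc.
- (* cycle case *)
  case/connectP: hc => p hp.
  case: (shortenP hp) => p' hp' hu _ hlast; clear hp p.
  case: (extract hp' hu) => C [DC [R [hperm hor hpath hend]]].
  pose S := b :: p'.
  have haS : a \in S by rewrite hlast /S mem_last.
  have hbS : b \in S by rewrite mem_head.
  pose g := fun z : V => if z \in S then a else z.
  pose DC0 := (a, b) :: DC.
  have hcyc : forall z w, z \in S -> w \in S -> connect (darc DC0) z w.
    move=> z w hz hw.
    have hpath0 : path (darc DC0) b p'.
      apply: sub_path hpath => x y h; by rewrite /darc in_cons; apply/orP; right.
    apply: (connect_trans (y := a)).
      by rewrite hlast; apply: path_last_connect hpath0 hz.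
    apply: (connect_trans (y := b)); first by apply: connect1; rewrite /darc mem_head.
    exact: (path_connect hpath0).
  have hcovC : forall X, f_r r X <= dcut (((a, b) :: C) ++ R) X.
    move=> X; have := hcov X; rewrite !dcut_cons (dcut_perm X hperm); exact.
  have hC : forall f, f \in (a, b) :: C -> g f.1 = g f.2.
    move=> f; rewrite in_cons => /orP [/eqP -> | hf]; first by rewrite /g /= haS hbS.
    by move/andP: (hend f hf) => [h1 h2]; rewrite /g h1 h2.
  have hcovR := contr_cover hcovC hC.
  have hsR : size (map (gmap g) R) <= n.
    rewrite size_map; apply: leq_trans hs'.
    by rewrite (perm_size hperm) size_cat leq_addl.
  case: (IHn _ _ hsR hcovR) => Dg [hog hsg].
  case: (lift_exists hog) => DR [hoR hl].
  case: (orient_perm hperm (orient_cat hor hoR)) => D' [hoD' hmem].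
  exists ((a, b) :: D'); split.
    by rewrite /is_orientation /= eqxx /=; exact: hoD'.
  have hsubD : {subset DC0 <= (a, b) :: D'}.
    move=> z; rewrite !in_cons => /orP [-> // | hz].
    by rewrite hmem mem_cat hz !orbT.
  have hsubR : {subset DR <= (a, b) :: D'}.
    by move=> z hz; rewrite in_cons hmem mem_cat hz !orbT.
  apply: (sat_lift (g := g) _ hsubR hl hsg).
  move=> x y; rewrite /g; case: ifP => hx; case: ifP => hy.
  + by move=> _; apply: (connect_subD hsubD); apply: hcyc.
  + by move=> hay; rewrite -hay haS in hy.
  + by move=> hxa; rewrite hxa haS in hx.
  + by move=> ->; apply: connect0.
- (* bridge case *)
  pose X := [set z | connect (adj H') b z].
  have hbX : b \in X by rewrite inE connect0.
  have haX : a \notin X by rewrite inE.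
  have hX : forall f, f \in H' -> (f.1 \in X) = (f.2 \in X).
    move=> [x y] hf /=; rewrite !inE; apply/idP/idP => h.
    + apply: connect_trans h (connect1 _); by rewrite /adj hf.
    + apply: connect_trans h (connect1 _); by rewrite /adj hf orbT.
  have hd0 : dcut H' X = 0.
    apply/eqP; rewrite -leqn0 leqNgt -has_count; apply/hasPn => f hf /=.
    by rewrite (hX f hf) eqxx.
  have := hcov X; rewrite f_rE dcut_cons hd0 /= (negbTE haX) hbX /=.
  case hi: (outd (fun u v => r v u) X); last first.
  + move=> _. (* no demand into X: orient b -> a *)
    have hno : forall u v, r u v -> u \in ~: X -> v \in ~: X.
      move=> u v huv; rewrite !in_setC => hu; apply/negP => hv.
      move/negbT/negP: hi; apply; apply/existsP; exists v; apply/existsP; exists u.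
      by rewrite hv hu huv.
    have hX' : forall f, f \in H' -> (f.1 \in ~: X) = (f.2 \in ~: X).
      by move=> f hf; rewrite !in_setC hX.
    have hcov' : forall Z, f_r r Z <= dcut ((b, a) :: H') Z.
      by move=> Z; rewrite dcut_cons /= eq_sym; exact: hcov.
    have hbX' : b \notin ~: X by rewrite in_setC hbX.
    have haX' : a \in ~: X by rewrite in_setC.
    have := bridge_cover hbX' haX' hX' hcov'.
    move=> /(IHn _ _ hs') [D' [hoD' hsat]].
    exists ((b, a) :: D'); split.
      by rewrite /is_orientation /= eqxx orbT; exact: hoD'.
    exact: bridge_sat hno hsat.
  + case ho: (outd r X) => // _. (* no demand out of X: orient a -> b *)
    have hno : forall u v, r u v -> u \in X -> v \in X.
      move=> u v huv hu; apply/negPn/negP => hv.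
      move/negbT/negP: ho; apply; apply/existsP; exists u; apply/existsP; exists v.
      by rewrite hv hu huv.
    have := bridge_cover haX hbX hX hcov.
    move=> /(IHn _ _ hs') [D' [hoD' hsat]].
    exists ((a, b) :: D'); split.
      by rewrite /is_orientation /= eqxx; exact: hoD'.
    exact: bridge_sat hno hsat.
Qed.

End Main.


Theorem lemma2 (V : finType) (r : V -> V -> bool) (H : seq (V * V)) :
  (forall X : {set V}, f_r r X <= dcut H X) ->
  exists D : seq (V * V),
    is_orientation H D /\ (forall u v : V, r u v -> dipath D u v).
Proof.
move=> hcov.
case: (@main V (size H) H r (leqnn _) hcov) => D [hD hs].
by exists D; split => // u v /hs.
Qed.
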